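(* Let $(X,\tau)$ be a compact space and $(Y,\sigma)$ a kd-space. Then every continuous function $f\colon (X,\tau)\to(Y,\sigma)$ is perfect and super-closed. Consequently every continuous bijection $f\colon X\to Y$ is a homeomorphism, and every super-continuous bijection $f\colon X\to Y$ is a super-homeomorphism.
   Context: A space is a kd-space if every compact subset is $\delta$-closed, where: $U$ is regular open if $U=\mathrm{Int}(\mathrm{Cl}(U))$; $x$ is a $\delta$-cluster point of $B$ if $B\cap U\ne\emptyset$ for every regular open $U\ni x$; $B$ is $\delta$-closed if it contains all its $\delta$-cluster points; complements of $\delta$-closed sets are $\delta$-open. A continuous map is perfect if it is closed and has compact fibers. A function $f$ is super-closed if the image of every closed subset of $X$ is $\delta$-closed in $Y$, and super-continuous if the preimage of every open subset of $Y$ is $\delta$-open in $X$. A bijection is a super-homeomorphism if it is both super-closed and super-continuous. *)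

(* Defs.v *)
From mathcomp Require Import all_boot all_classical topology.
Set Implicit Arguments. Unset Strict Implicit. Unset Printing Implicit Defensive.
Local Open Scope classical_set_scope.

Section Delta.
Context {T : topologicalType}.

Definition regular_open (U : set T) : Prop := U = interior (closure U).

Definition delta_cluster (B : set T) (x : T) : Prop :=
  forall U : set T, regular_open U -> U x -> B `&` U !=set0.

Definition delta_closed (B : set T) : Prop :=
  forall x, delta_cluster B x -> B x.

Definition delta_open (A : set T) : Prop := delta_closed (~` A).

Definition kd_space : Prop :=
  forall K : set T, compact K -> delta_closed K.

End Delta.

Arguments kd_space T : clear implicits.

Section Maps.
Context {X Y : topologicalType}.

Definition closed_map (f : X -> Y) : Prop :=
  forall A : set X, closed A -> closed (f @` A).

Definition perfect_map (f : X -> Y) : Prop :=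
  continuous f /\ closed_map f /\ (forall y : Y, compact (f @^-1` [set y])).

Definition super_closed (f : X -> Y) : Prop :=
  forall A : set X, closed A -> delta_closed (f @` A).

Definition super_continuous (f : X -> Y) : Prop :=
  forall B : set Y, open B -> delta_open (f @^-1` B).

Definition super_homeomorphism (f : X -> Y) : Prop :=
  bijective f /\ super_closed f /\ super_continuous f.

Definition homeomorphism (f : X -> Y) : Prop :=
  exists g : Y -> X, [/\ cancel f g, cancel g f, continuous f & continuous g].

End Maps.

(* Main.v *)
Require Import Defs.
From mathcomp Require Import all_boot all_classical topology.
Local Open Scope classical_set_scope.

Lemma dclosed_closed (T : topologicalType) (B : set T) :
  delta_closed B -> closed B.
Proof.
move=> dB x clx; apply: dB => U rU Ux.
have oU : open U by rewrite rU; exact: open_interior.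
exact: clx (open_nbhs_nbhs (conj oU Ux)).
Qed.

Lemma dopen_open (T : topologicalType) (A : set T) :
  delta_open A -> open A.
Proof. by move=> /dclosed_closed; rewrite closedC. Qed.

Lemma part1 (X Y : topologicalType) (hX : compact [set: X]) (hY : kd_space Y)
  (f : X -> Y) : continuous f -> perfect_map f /\ super_closed f.
Proof.
move=> cf.
have cimg : forall A : set X, closed A -> compact (f @` A).
  move=> A cA; apply: continuous_compact; first exact: continuous_subspaceT.
  by have := compact_closedI hX cA; rewrite setTI.
have sc : super_closed f by move=> A cA; apply: hY; exact: cimg.
split=> //; split=> //; split.
  by move=> A cA; apply: dclosed_closed; exact: sc.
move=> y; have cy : closed [set y] by apply: dclosed_closed; apply: hY; exact: compact_set1.
have := compact_closedI hX (proj1 (continuous_closedP f) cf _ cy).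
by rewrite setTI.
Qed.

Theorem mainTheorem7 (X Y : topologicalType)
  (hX : compact [set: X]) (hY : kd_space Y) :
  [/\ (forall f : X -> Y, continuous f -> perfect_map f /\ super_closed f),
      (forall f : X -> Y, continuous f -> bijective f -> homeomorphism f)
    & (forall f : X -> Y, super_continuous f -> bijective f ->
         super_homeomorphism f)].
Proof.
split.
- exact: part1.
- move=> f cf [g fK gK]; exists g; split=> //.
  apply/continuous_closedP => A cA.
  have -> : g @^-1` A = f @` A.
    rewrite eqEsubset; split=> y.
      by move=> Agy; exists (g y) => //; rewrite gK.
    by case=> x Ax <-; rewrite /preimage /= fK.
  by have [[_ [h _]] _] := @part1 X Y hX hY f cf; exact: h.
- move=> f sf bf.
  have cf : continuous f.
    by apply/continuousP => B oB; apply: dopen_open; exact: sf.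
  split=> //; split=> //; exact: (proj2 (@part1 X Y hX hY f cf)).
Qed.
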